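(* Let $\mathbf H\subset GL_m(\mathbb C)$ be a finite unitary group with a fixed generating set $X_{\mathbf H}$, and $\mathbf G=\mathbf H\wr\mathrm{Sym}_n$ with the subgroup sequence, coset leaders, initial vector and generating sets $X_k$ of $\mathbf G_k$ described in the context. Then the Error Control Property holds for every consecutive pair $\mathbf G_{k-1}<\mathbf G_k$.
   Context: $\mathbf G$ is the group of $mn\times mn$ block permutation matrices with nonzero blocks in $\mathbf H$; elements written $\sigma(h_1,\dots,h_n)$, $\sigma\in\mathrm{Sym}_n$, $h_i\in\mathbf H$. Subgroups: $\mathbf G_0=\{I\}$, $\mathbf G_{2l-1}=(\mathbf H\wr\mathrm{Sym}_l)\oplus\{I_{m(n-l)}\}$ ($1\le l\le n$), $\mathbf G_{2l}=(\mathbf H\wr\mathrm{Sym}_l)\oplus\mathbf H\oplus\{I_{m(n-l-1)}\}$ ($1\le l\le n-1$). Coset leaders: $\operatorname{CL}(\mathbf G_1/\mathbf G_0)=\mathbf G_1$; $\operatorname{CL}(\mathbf G_{2l}/\mathbf G_{2l-1})=\{(1,\dots,1,h,1,\dots,1):h\in\mathbf H\text{ in slot }l+1\}$; $\operatorname{CL}(\mathbf G_{2l+1}/\mathbf G_{2l})=\{(j\ j{+}1\ \cdots\ l{+}1):1\le j\le l+1\}$. Initial vector $\mathbf x_0=(u_1\mathbf v_0,\dots,u_n\mathbf v_0)$ with $\mathbf v_0\in\mathbb C^m$ a unit vector fixed by no nonidentity element of $\mathbf H$ and real $0<u_1<\cdots<u_n$, $\|\mathbf x_0\|=1$. Generators: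 $X_{2l-1}=\{(h,1,\dots,1):h\in X_{\mathbf H}\}\cup\{(1\,2),(2\,3),\dots,(l{-}1\ l)\}$, $X_{2l}=X_{2l-1}\cup\{(1,\dots,1,h,1,\dots,1):h\in\mathbf H\text{ in slot }l+1\}$, $X_0=\emptyset$. Error Control Property for $H<K$ with coset leaders $\operatorname{CL}(K/H)$ and generating sets $X_H,X_K$: for all $b\in X_K\cup X_K^{-1}$ and $c\in\operatorname{CL}(K/H)$, either $bc\in\operatorname{CL}(K/H)$ or $c^{-1}bc\in X_H\cup X_H^{-1}$ (where $X^{-1}=\{a^{-1}:a\in X\}$). *)

(* Defs.v *)
From mathcomp Require Import all_boot all_order all_algebra all_fingroup.
Set Implicit Arguments. Unset Strict Implicit. Unset Printing Implicit Defensive.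
Import Order.TTheory GRing.Theory Num.Theory.
Local Open Scope ring_scope.

(* An mn x mn block matrix is represented as an n x n matrix whose entries
   are m x m matrices; block-matrix multiplication is then exactly [*m]. *)
Notation blk C m n := 'M['M[C]_m]_n.

Section Wreath.
Variables (C : numClosedFieldType) (m n : nat).

(* sigma(h_1,...,h_n) = P_sigma * diag(h_1,...,h_n), where P_sigma is the block
   permutation matrix sending the j-th block basis vector to the sigma(j)-th:
   block (i,j) is h_j if i = sigma j and 0 otherwise. *)
Definition bperm (s : 'S_n) (h : 'I_n -> 'M[C]_m) : blk C m n :=
  \matrix_(i, j) (if i == s j then h j else 0).

(* (1,...,1,h,1,...,1) with h in (0-based) slot k *)
Definition slotmx (k : 'I_n) (h : 'M[C]_m) : blk C m n :=
  bperm 1 (fun i => if i == k then h else 1%:M).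

Definition pmx (s : 'S_n) : blk C m n := bperm s (fun _ => 1%:M).

(* the cycle (j j+1 ... l+1) of the paper, written 0-based as
   j0 -> j0+1 -> ... -> l -> j0  (with j0 = j-1) *)
Definition cycfun (j0 l i : nat) : nat :=
  if ((j0 <= i) && (i < l))%N then i.+1 else if i == l then j0 else i.

(* X_{2l-1} (paper, 1-based), l >= 1 *)
Definition Xodd (XH : seq 'M[C]_m) (l : nat) (A : blk C m n) : Prop :=
  (exists (h : 'M[C]_m) (k : 'I_n), h \in XH /\ val k = 0%N /\ A = slotmx k h)
  \/ (exists i i' : 'I_n, val i' = (val i).+1 /\ (val i').+1 <= l
        /\ A = pmx (tperm i i'))%N.

(* X_{2l} = X_{2l-1} u {(1,..,1,h,1,..,1) : h in H, h in slot l+1 (1-based)} *)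
Definition Xeven (HH XH : seq 'M[C]_m) (l : nat) (A : blk C m n) : Prop :=
  Xodd XH l A \/
  (exists (h : 'M[C]_m) (k : 'I_n), h \in HH /\ val k = l /\ A = slotmx k h).

Definition Xk (HH XH : seq 'M[C]_m) (k : nat) : blk C m n -> Prop :=
  if k == 0%N then (fun _ => False)
  else if odd k then Xodd XH k.+1./2 else Xeven HH XH k./2.

Definition CLk (HH : seq 'M[C]_m) (k : nat) (A : blk C m n) : Prop :=
  if k == 1%N then
    (* CL(G_1/G_0) = G_1 = {(h,1,...,1) : h in H} *)
    exists (h : 'M[C]_m) (k0 : 'I_n), h \in HH /\ val k0 = 0%N /\ A = slotmx k0 h
  else if odd k then
    (* k = 2l+1 : cycles (j ... l+1), 1 <= j <= l+1 *)
    exists (j0 : nat) (s : 'S_n), (j0 <= k./2)%N /\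
      (forall i : 'I_n, val (s i) = cycfun j0 k./2 (val i)) /\ A = pmx s
  else
    (* k = 2l : (1,...,1,h,1,...,1), h in H in slot l+1 (1-based) *)
    exists (h : 'M[C]_m) (k0 : 'I_n), h \in HH /\ val k0 = k./2 /\ A = slotmx k0 h.

Definition invset (X : blk C m n -> Prop) (b : blk C m n) : Prop :=
  exists a, X a /\ a *m b = 1%:M /\ b *m a = 1%:M.

Definition ECP (XH XK CL : blk C m n -> Prop) : Prop :=
  forall b c : blk C m n, (XK b \/ invset XK b) -> CL c ->
    CL (b *m c) \/
    (forall ci : blk C m n, ci *m c = 1%:M -> c *m ci = 1%:M ->
       XH (ci *m b *m c) \/ invset XH (ci *m b *m c)).

End Wreath.

Definition unitary_group (C : numClosedFieldType) (m : nat) (HH : seq 'M[C]_m) :=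
  [/\ (1%:M : 'M[C]_m) \in HH,
      {in HH &, forall g h, g *m h \in HH},
      {in HH, forall h, exists2 h', h' \in HH & h *m h' = 1%:M /\ h' *m h = 1%:M}
    & {in HH, forall h, h *m (map_mx Num.conj h)^T = 1%:M}].

Definition generates (C : numClosedFieldType) (m : nat) (HH XH : seq 'M[C]_m) :=
  {subset XH <= HH} /\
  {in HH, forall h, exists s : seq 'M[C]_m,
     (forall x, x \in s -> x \in XH \/
        exists2 y, y \in XH & y *m x = 1%:M /\ x *m y = 1%:M)
     /\ h = foldr mulmx 1%:M s}.

(* Main.v *)
Require Import Defs.
From mathcomp Require Import all_boot all_order all_algebra all_fingroup.
From mathcomp Require Import zify.
Import Order.TTheory GRing.Theory Num.Theory.
Local Open Scope ring_scope.

Section W.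
Variables (C : numClosedFieldType) (m n : nat).
Implicit Types (s t : 'S_n) (a b c : blk C m n).

Lemma bperm_mul s t (g h : 'I_n -> 'M[C]_m) :
  bperm s g *m bperm t h = bperm (t * s) (fun j => g (t j) *m h j).
Proof.
apply/matrixP => i j; rewrite !mxE (bigD1 (t j)) //= !mxE eqxx.
rewrite big1 ?addr0; last by move=> k /negbTE nk; rewrite !mxE nk mulr0.
by rewrite permM; case: eqP => _; rewrite ?mul0r.
Qed.

Lemma bperm_ext s s' (g g' : 'I_n -> 'M[C]_m) : s = s' -> (forall j, g j = g' j) ->
  bperm s g = bperm s' g'.
Proof. by move=> -> E; apply/matrixP => i j; rewrite !mxE E. Qed.

Lemma bperm1 : (1%:M : blk C m n) = bperm 1 (fun _ => 1%:M).
Proof. by apply/matrixP => i j; rewrite !mxE perm1; case: eqP. Qed.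

Lemma val_tperm (x y z : 'I_n) : val (tperm x y z) =
  (if val z == val x then val y else if val z == val y then val x else val z).
Proof.
case: tpermP => [->|->|/eqP nx /eqP ny]; rewrite ?eqxx //.
  by case: eqP.
by rewrite !val_eqE (negbTE nx) (negbTE ny).
Qed.

Local Notation P s := (pmx C m s).

Lemma slot_mul k (g h : 'M[C]_m) : slotmx k g *m slotmx k h = slotmx k (g *m h) :> blk C m n.
Proof.
rewrite /slotmx bperm_mul mulg1; apply: bperm_ext => // j.
by rewrite perm1; case: eqP => _; rewrite ?mul1mx.
Qed.

Lemma slot1 (k : 'I_n) : slotmx k 1%:M = 1%:M :> blk C m n.
Proof. by rewrite bperm1; apply: bperm_ext => // j; case: eqP. Qed.

Lemma slot_comm k k' (g h : 'M[C]_m) : k != k' ->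
  slotmx k g *m slotmx k' h = slotmx k' h *m slotmx k g :> blk C m n.
Proof.
move=> /negbTE kk'; rewrite /slotmx !bperm_mul; apply: bperm_ext => // j.
rewrite perm1; case: (eqVneq j k) => [->|jk]; first by rewrite kk' mulmx1 mul1mx.
by case: eqP; rewrite ?mulmx1 ?mul1mx.
Qed.

Lemma pmx_slot s k (h : 'M[C]_m) : P s *m slotmx k h = slotmx (s k) h *m P s.
Proof.
rewrite /slotmx /pmx !bperm_mul mulg1 mul1g; apply: bperm_ext => // j.
by rewrite (inj_eq perm_inj) mul1mx mulmx1.
Qed.

Lemma pmx_mul s t : P s *m P t = P (t * s).
Proof. by rewrite /pmx bperm_mul; apply: bperm_ext => // j; rewrite mul1mx. Qed.

Lemma pmx1 : P (1 : 'S_n) = 1%:M.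
Proof. by rewrite bperm1. Qed.

Lemma inv_uniq a a' b : a' *m a = 1%:M -> a *m b = 1%:M -> b = a'.
Proof. by move=> H1 H2; rewrite -[b]mul1mx -H1 -mulmxA H2 mulmx1. Qed.

Lemma comm_inv a b c : a *m c = c *m a -> a *m b = 1%:M -> b *m a = 1%:M ->
  b *m c = c *m b.
Proof.
move=> ac ab ba.
by rewrite -[b *m c]mulmx1 -ab !mulmxA -(mulmxA b c) -ac mulmxA ba mul1mx.
Qed.

Lemma conj_inv a b c X Y : a *m c = c *m X -> a *m b = 1%:M -> b *m a = 1%:M ->
  X *m Y = 1%:M -> Y *m X = 1%:M -> b *m c = c *m Y.
Proof.
move=> ac ab ba XY YX.
by rewrite -[b *m c]mulmx1 -XY !mulmxA -(mulmxA b c) -ac mulmxA ba mul1mx.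
Qed.

Lemma conj_concl b c ci Z : b *m c = c *m Z -> ci *m c = 1%:M -> ci *m b *m c = Z.
Proof. by move=> E H; rewrite -mulmxA E mulmxA H mul1mx. Qed.

Lemma perm_val (p q : 'S_n) : (forall x, val (p x) = val (q x)) -> p = q.
Proof. by move=> E; apply/permP => x; apply: val_inj. Qed.

Variables (HH XH : seq 'M[C]_m).
Hypothesis HH1 : (1%:M : 'M[C]_m) \in HH.
Hypothesis HHM : {in HH &, forall g h, g *m h \in HH}.
Hypothesis HHV : {in HH, forall h, exists2 h', h' \in HH & h *m h' = 1%:M /\ h' *m h = 1%:M}.
Hypothesis XHH : {subset XH <= HH}.

Lemma slot_invform k x b : x \in HH -> slotmx k x *m b = 1%:M ->
  exists2 x', x' \in HH & [/\ b = slotmx k x',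
     slotmx k x *m slotmx k x' = 1%:M & slotmx k x' *m slotmx k x = 1%:M :> blk C m n].
Proof.
move=> /HHV [x' x'H [e1 e2]] xb; exists x' => //.
have E1 : slotmx k x *m slotmx k x' = 1%:M :> blk C m n by rewrite slot_mul e1 slot1.
have E2 : slotmx k x' *m slotmx k x = 1%:M :> blk C m n by rewrite slot_mul e2 slot1.
by split => //; apply: inv_uniq E2 xb.
Qed.

Lemma tperm_invform (i i' : 'I_n) b : P (tperm i i') *m b = 1%:M -> b = P (tperm i i').
Proof. by move=> H; apply: inv_uniq H; rewrite pmx_mul tperm2 pmx1. Qed.


Ltac dest_ifs := repeat match goal with |- context [if ?c then _ else _] =>
  match c with context [if _ then _ else _] => fail 1 | _ =>
    let H := fresh "H" in destruct c eqn:H end end.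

Lemma ecp1 : @ECP C m n (Xk HH XH 0) (Xk HH XH 1) (CLk HH 1).
Proof.
move=> b c Hb Hc; left.
rewrite /CLk /= in Hc *; case: Hc => h [k0 [hH [vk0 ->]]].
have [x xH ->] : exists2 x, x \in HH & b = slotmx k0 x.
  rewrite /Xk /= in Hb.
  case: Hb => [[[x [k1 [xX [vk1 ->]]]] | [i [i' [e [le _]]]]] |
               [a [[[x [k1 [xX [vk1 ->]]]] | [i [i' [e [le _]]]]] [ab ba]]]].
  - exists x; first exact: XHH.
    by have -> : k1 = k0 by apply: val_inj; move: vk1 vk0 => /= *; lia.
  - lia.
  - have [x' x'H [-> _ _]] := slot_invform _ _ _ (XHH _ xX) ab.
    exists x' => //.
    by have -> : k1 = k0 by apply: val_inj; move: vk1 vk0 => /= *; lia.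
  - lia.
by exists (x *m h), k0; rewrite slot_mul; split => //; apply: HHM.
Qed.


Lemma Xk_even l : (0 < l)%N -> Xk HH XH l.*2 = @Xeven C m n HH XH l.
Proof.
move=> l0; rewrite /Xk ifF ?odd_double ?half_double //.
by apply/negbTE; rewrite double_eq0 -lt0n.
Qed.

Lemma Xk_odd l : Xk HH XH l.*2.+1 = @Xodd C m n XH l.+1.
Proof.
rewrite /Xk /= odd_double /=.
by rewrite half_double.
Qed.


Lemma CLk_even l : CLk HH l.*2 = fun A : blk C m n =>
  exists (h : 'M[C]_m) (k0 : 'I_n), h \in HH /\ val k0 = l /\ A = slotmx k0 h.
Proof.
rewrite /CLk; have -> : (l.*2 == 1%N) = false.
  by apply/negbTE/eqP => E; move: (odd_double l); rewrite E.
by rewrite odd_double half_double.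
Qed.

Lemma CLk_odd l : (0 < l)%N -> CLk HH l.*2.+1 = fun A : blk C m n =>
    exists (j0 : nat) (s : 'S_n), (j0 <= l)%N /\
      (forall i : 'I_n, val (s i) = cycfun j0 l (val i)) /\ A = P s.
Proof.
move=> l0; rewrite /CLk; have -> : (l.*2.+1 == 1%N) = false.
  by apply/negbTE; rewrite eqSS double_eq0 -lt0n.
by rewrite /= odd_double /= uphalf_double.
Qed.

Lemma ecp_even l : (0 < l)%N -> (l < n)%N ->
  @ECP C m n (Xk HH XH (l.*2).-1) (Xk HH XH l.*2) (CLk HH l.*2).
Proof.
move=> l0 ln.
have EX1 : Xk HH XH (l.*2).-1 = @Xodd C m n XH l.
  by case: l l0 ln => // l _ _; rewrite doubleS /= Xk_odd.
rewrite EX1 Xk_even // CLk_even => b c Hb [h [k0 [hH [vk0 ->]]]].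
have key : forall a, Xodd XH l a -> a *m slotmx k0 h = slotmx k0 h *m a.
  move=> a [[x [k1 [xX [vk1 ->]]]] | [i [i' [e [le ->]]]]].
  - by apply: slot_comm; rewrite -val_eqE; apply/eqP; move: vk1 vk0 => /= *; lia.
  - rewrite pmx_slot tpermD //; rewrite -val_eqE; apply/eqP; move: e le vk0 => /= *; lia.
case: Hb => [[Ha | [x [k1 [xH [vk1 ->]]]]] | [a [[Ha | [x [k1 [xH [vk1 ->]]]]] [ab ba]]]].
- by right => ci cic _; left; rewrite (conj_concl _ _ _ _ (key _ Ha) cic).
- left; exists (x *m h), k0.
  have -> : k1 = k0 by apply: val_inj; move: vk1 vk0 => /= *; lia.
  by rewrite slot_mul; split => //; apply: HHM.
- right => ci cic _; right; exists a; split; first exact: Ha.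
  by rewrite (conj_concl _ _ _ _ (comm_inv _ _ _ (key _ Ha) ab ba) cic).
- have [x' x'H [-> _ _]] := slot_invform _ _ _ xH ab.
  left; exists (x' *m h), k0.
  have -> : k1 = k0 by apply: val_inj; move: vk1 vk0 => /= *; lia.
  by rewrite slot_mul; split => //; apply: HHM.
Qed.


Lemma ecp_odd l : (0 < l)%N -> (l < n)%N ->
  @ECP C m n (Xk HH XH (l.*2.+1).-1) (Xk HH XH l.*2.+1) (CLk HH l.*2.+1).
Proof.
move=> l0 ln.
rewrite /= Xk_even // Xk_odd CLk_odd // => b c Hb [j0 [s [Hj0 [Hs ->]]]].
pose lo : 'I_n := Ordinal ln.
have slotcase : forall x (k1 : 'I_n), x \in XH -> val k1 = 0%N ->
    exists2 k' : 'I_n, s k' = k1 & Xeven HH XH l (slotmx k' x).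
  move=> x k1 xX vk1.
  case: (eqVneq j0 0%N) => j00.
  - exists lo; first by apply: val_inj; rewrite Hs /= /cycfun j00 ltnn eqxx; move: vk1 => /= ->.
    by right; exists x, lo; split => //; exact: XHH.
  - exists k1; first by apply: val_inj; rewrite Hs /cycfun; move: vk1 => /= ->; dest_ifs; lia.
    by left; left; exists x, k1.
have tcase : forall i i' : 'I_n, val i' = (val i).+1 -> ((val i').+1 <= l.+1)%N ->
   (exists (j1 : nat) (s' : 'S_n), (j1 <= l)%N /\
      (forall i : 'I_n, val (s' i) = cycfun j1 l (val i)) /\ P (tperm i i') *m P s = P s')
   \/ (forall ci, ci *m P s = 1%:M -> P s *m ci = 1%:M ->
        Xeven HH XH l (ci *m P (tperm i i') *m P s)
        \/ invset (Xeven HH XH l) (ci *m P (tperm i i') *m P s)).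
  move=> i i' e le.
  have : (val i' < j0 \/ val i' = j0 \/ val i = j0 \/ j0 < val i)%N by lia.
  case=> [H|[H|[H|H]]].
  - right => ci cic _; left; left; right; exists i, i'; split => //; split; first by lia.
    apply: (conj_concl _ _ _ _ _ cic); rewrite !pmx_mul; congr (pmx _ _ _).
    apply: perm_val => x; rewrite !permM val_tperm !Hs val_tperm /cycfun; dest_ifs; lia.
  - left; exists j0.-1, (s * tperm i i')%g; split; first by lia.
    split; last by rewrite pmx_mul.
    move=> x; rewrite permM val_tperm !Hs /cycfun; dest_ifs; lia.
  - left; exists j0.+1, (s * tperm i i')%g; split; first by lia.
    split; last by rewrite pmx_mul.
    move=> x; rewrite permM val_tperm !Hs /cycfun; dest_ifs; lia.
  - have i0n : (val i - 1 < n)%N by move: (ltn_ord i); lia.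
    pose i0 : 'I_n := Ordinal i0n.
    move: e le H => /= e le H.
    right => ci cic _; left; left; right; exists i0, i; split; first by rewrite /i0 /=; lia.
    split; first by rewrite /=; lia.
    apply: (conj_concl _ _ _ _ _ cic); rewrite !pmx_mul; congr (pmx _ _ _).
    apply: perm_val => x; rewrite !permM val_tperm !Hs val_tperm /cycfun /i0 /=; dest_ifs; lia.
case: Hb => [[[x [k1 [xX [vk1 ->]]]] | [i [i' [e [le ->]]]]] |
             [a [[[x [k1 [xX [vk1 Ea]]]] | [i [i' [e [le Ea]]]]] [ab ba]]]].
- have [k' sk' Hk'] := slotcase x k1 xX vk1.
  right => ci cic _; left.
  by rewrite (conj_concl _ _ _ (slotmx k' x) _ cic) // pmx_slot sk'.
- exact: tcase.
- have [k' sk' Hk'] := slotcase x k1 xX vk1.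
  have [x' _ [xx' x'x]] := HHV _ (XHH _ xX).
  have E1 : slotmx k' x *m slotmx k' x' = 1%:M :> blk C m n by rewrite slot_mul xx' slot1.
  have E2 : slotmx k' x' *m slotmx k' x = 1%:M :> blk C m n by rewrite slot_mul x'x slot1.
  have ac : a *m P s = P s *m slotmx k' x by rewrite Ea pmx_slot sk'.
  right => ci cic _; right; exists (slotmx k' x).
  by rewrite (conj_concl _ _ _ _ (conj_inv _ _ _ _ _ ac ab ba E1 E2) cic).
- rewrite Ea in ab; rewrite (tperm_invform _ _ _ ab); exact: tcase.
Qed.

End W.
Theorem mainTheorem9 (C : numClosedFieldType) (m n : nat)
  (HH XH : seq 'M[C]_m)
  (v0 : 'cV[C]_m) (u : 'I_n -> C) :
  unitary_group HH ->
  generates HH XH ->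
  (* initial vector x_0 = (u_1 v_0, ..., u_n v_0) *)
  \sum_(i < m) `|v0 i 0| ^+ 2 = 1 ->
  {in HH, forall h, h *m v0 = v0 -> h = 1%:M} ->
  (forall i, u i \is Num.real) ->
  (forall i : 'I_n, val i = 0%N -> 0 < u i) ->
  (forall i j : 'I_n, (val i < val j)%N -> u i < u j) ->
  \sum_(i < n) \sum_(k < m) `|u i * v0 k 0| ^+ 2 = 1 ->
  forall k : nat, (1 <= k <= (2 * n).-1)%N ->
    ECP (@Xk C m n HH XH k.-1) (@Xk C m n HH XH k) (@CLk C m n HH k).
Proof.
move=> [H1 HM HV _] [XS _] _ _ _ _ _ _ k /andP [k1 k2].
move: (odd_double_half k); case: (odd k) => /= E; rewrite -E.
- case: (posnP k./2) => l0.
    by rewrite l0; exact: ecp1.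
  apply: ecp_odd => //; lia.
- apply: ecp_even => //; lia.
Qed.
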